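(* Let $s(t)$, $F_\mu$ be as in the context. Put $s_i=s(t_i)$ ($i=1,2$) and define the power series in $t_1,t_2$ \[ m=\frac{s_1-s_2}{t_1-t_2},\qquad b=\frac{t_1s_2-t_2s_1}{t_1-t_2},\qquad n=m+t_1t_2\,\frac{1+\mu_2m+\mu_4m^2+\mu_6m^3}{1-\mu_3b-\mu_6b^2}. \] Then \[ F_\mu(t_1,t_2)=\Big(t_1+t_2-\mu_1t_1t_2-\mu_3\big((t_1+t_2)b+t_1t_2m\big)-\mu_4t_1t_2b-\mu_6b\big((t_1+t_2)b+2t_1t_2m\big)\Big)\cdot\frac{1+\mu_2m+\mu_4m^2+\mu_6m^3}{(1+\mu_2n+\mu_4n^2+\mu_6n^3)(1-\mu_3b-\mu_6b^2)^2}. \]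
   Context: Let $\mu_1,\mu_2,\mu_3,\mu_4,\mu_6$ be independent indeterminates, $E=\mathbb{Z}[\mu_1,\mu_2,\mu_3,\mu_4,\mu_6]$. Consider the projective cubic $Y^2Z+\mu_1XYZ+\mu_3YZ^2=X^3+\mu_2X^2Z+\mu_4XZ^2+\mu_6Z^3$ with the chord-tangent group law: neutral element $O=(0:1:0)$, and three points sum to zero iff they are the intersection points (with multiplicity) of the curve with a line. In Tate coordinates $t=-X/Y$, $s=-Z/Y$ the curve reads $s=t^3+\mu_1ts+\mu_2t^2s+\mu_3s^2+\mu_4ts^2+\mu_6s^3$; $s(t)\in E[[t]]$ is the unique power series solution with $s(0)=0$, so points near $O$ are $(t,s(t))$. The general elliptic formal group law $F_\mu(t_1,t_2)$ is the power series giving the $t$-coordinate of $P_1+P_2$, where $P_i=(t_i,s(t_i))$. (The line through $P_1,P_2$ is $s=mt+b$; the series $n$ equals the slope $s_3/t_3$ of the line through $O$ and the third intersection point $(t_3,s_3)$ of that line with the curve.) *)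

(* Defs.v *)
From mathcomp Require Import all_boot all_algebra.
From mathcomp Require Import mpoly.
From Stdlib Require Import ClassicalEpsilon.

Set Implicit Arguments.
Unset Strict Implicit.
Unset Printing Implicit Defensive.

Import GRing.Theory.
Local Open Scope ring_scope.

(* Formal power series in two variables t1, t2 over a commutative ring R,   *)
(* represented by their coefficient functions: f i j is the coefficient of  *)
Section PowerSeries2.
Variable R : comRingType.

Definition ps2 := nat -> nat -> R.

Definition ps2_const (c : R) : ps2 :=
  fun i j => if (i == 0%N) && (j == 0%N) then c else 0.
Definition ps2_t1 : ps2 := fun i j => if (i == 1%N) && (j == 0%N) then 1 else 0.
Definition ps2_t2 : ps2 := fun i j => if (i == 0%N) && (j == 1%N) then 1 else 0.
Definition ps2_add (f g : ps2) : ps2 := fun i j => f i j + g i j.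
Definition ps2_opp (f : ps2) : ps2 := fun i j => - f i j.
Definition ps2_sub (f g : ps2) : ps2 := ps2_add f (ps2_opp g).
Definition ps2_mul (f g : ps2) : ps2 :=
  fun i j => \sum_(k < i.+1) \sum_(l < j.+1) f k l * g (i - k)%N (j - l)%N.

(* Exact quotient f / g in R[[t1,t2]]: a series h with g * h = f
   (chosen by Hilbert's epsilon; when g is a non-zero-divisor dividing f,
   as in every use below, this is the unique quotient). *)
Definition ps2_div (f g : ps2) : ps2 :=
  epsilon (inhabits (fun _ _ => 0)) (fun h : ps2 => ps2_mul g h = f).

Definition ps2_swap (f : ps2) : ps2 := fun i j => f j i.

End PowerSeries2.

Declare Scope ps2_scope.
Delimit Scope ps2_scope with PS.
Notation "f + g" := (ps2_add f g) : ps2_scope.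
Notation "f - g" := (ps2_sub f g) : ps2_scope.
Notation "- f" := (ps2_opp f) : ps2_scope.
Notation "f * g" := (ps2_mul f g) : ps2_scope.
Notation "f / g" := (ps2_div f g) : ps2_scope.
Notation "c %:S" := (ps2_const c) (at level 2, format "c %:S") : ps2_scope.

Definition E : comRingType := {mpoly int[5]}.
Definition mu1 : E := 'X_(inord 0).
Definition mu2 : E := 'X_(inord 1).
Definition mu3 : E := 'X_(inord 2).
Definition mu4 : E := 'X_(inord 3).
Definition mu6 : E := 'X_(inord 4).

Definition t1 : ps2 E := ps2_t1 E.
Definition t2 : ps2 E := ps2_t2 E.

Local Open Scope ps2_scope.

(* Right-hand side of the curve equation in Tate coordinates
   s = t^3 + mu1 t s + mu2 t^2 s + mu3 s^2 + mu4 t s^2 + mu6 s^3,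
   evaluated at power series t, s. *)
Definition curve_rhs (t s : ps2 E) : ps2 E :=
  t * t * t + mu1%:S * t * s + mu2%:S * t * t * s + mu3%:S * s * s
  + mu4%:S * t * s * s + mu6%:S * s * s * s.

(* s(t) in E[[t]]: the unique power series with s(0) = 0 and
   s = curve_rhs t s.  It is represented as a series in the variable t1
   alone (no t2); thus tate_s = s(t1). *)
Definition tate_s : ps2 E :=
  epsilon (inhabits (fun _ _ => 0))
    (fun f : ps2 E => (forall i j, (0 < j)%N -> f i j = 0) /\ f 0%N 0%N = 0
                      /\ f = curve_rhs t1 f).

Definition s1 : ps2 E := tate_s.
Definition s2 : ps2 E := ps2_swap tate_s.

(* slope and intercept of the line s = m t + b through P1 = (t1,s1) and
   P2 = (t2,s2) *)
Definition line_m : ps2 E := (s1 - s2) / (t1 - t2).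
Definition line_b : ps2 E := (t1 * s2 - t2 * s1) / (t1 - t2).

(* Substituting s = a t + c into  s - curve_rhs t s  gives a cubic in t whose
   t^3-coefficient is  -(1 + mu2 a + mu4 a^2 + mu6 a^3)  and whose
   t^2-coefficient is  -(mu1 a + mu2 c + mu3 a^2 + 2 mu4 a c + 3 mu6 a^2 c).
   Given two of its roots ta, tb, the third root (with multiplicity) is, by
   Vieta, -(coef t^2)/(coef t^3) - ta - tb. *)
Definition line_coef3 (a : ps2 E) : ps2 E :=
  1%:S + mu2%:S * a + mu4%:S * a * a + mu6%:S * a * a * a.
Definition line_coef2 (a c : ps2 E) : ps2 E :=
  mu1%:S * a + mu2%:S * c + mu3%:S * a * a + (2 * mu4)%:S * a * c
  + (3 * mu6)%:S * a * a * c.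
Definition third_root (ta tb a c : ps2 E) : ps2 E :=
  - (line_coef2 a c / line_coef3 a) - ta - tb.

Definition t3 : ps2 E := third_root t1 t2 line_m line_b.
Definition s3 : ps2 E := line_m * t3 + line_b.

(* P1 + P2 = -P3 is the third intersection point of the curve with the line
   s = n t through O = (0,0) and P3, where n = s3 / t3; its t-coordinate is
   the root of the cubic other than 0 and t3. *)
Definition slope_OP3 : ps2 E := s3 / t3.
Definition F_mu : ps2 E := third_root 0%:S t3 slope_OP3 0%:S.

(* Main.v *)
Require Import Defs.
From mathcomp Require Import all_boot all_algebra.
From mathcomp Require Import zify.
From Stdlib Require Import ClassicalEpsilon FunctionalExtensionality Ring.
Set Implicit Arguments. Unset Strict Implicit. Unset Printing Implicit Defensive.
Import GRing.Theory.
Local Open Scope ring_scope.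

Section Gen.
Variable R : comRingType.

Lemma coefMM (p q : {poly {poly R}}) i j : ((p*q)`_i)`_j =
  \sum_(k < i.+1) \sum_(l < j.+1) p`_k`_l * q`_(i-k)`_(j-l).
Proof. rewrite coefM coef_sum; apply: eq_bigr => k _; by rewrite coefM. Qed.

Definition tr N (f : ps2 R) : {poly {poly R}} := \poly_(k < N) \poly_(l < N) f k l.
Lemma trE N f k l : (k < N)%N -> (l < N)%N -> (tr N f)`_k`_l = f k l.
Proof. by move=> hk hl; rewrite coef_poly hk coef_poly hl. Qed.

Lemma mul_agree (p q : {poly {poly R}}) (f g : ps2 R) i j :
  (forall k l, (k <= i)%N -> (l <= j)%N -> p`_k`_l = f k l) ->
  (forall k l, (k <= i)%N -> (l <= j)%N -> q`_k`_l = g k l) ->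
  ps2_mul f g i j = ((p*q)`_i)`_j.
Proof.
move=> hp hq; rewrite coefMM /ps2_mul; apply: eq_bigr => k _; apply: eq_bigr => l _.
have := ltn_ord k; have := ltn_ord l => hl hk.
rewrite hp ?hq //; lia.
Qed.

Lemma mulE N f g i j : (i < N)%N -> (j < N)%N ->
  ps2_mul f g i j = ((tr N f * tr N g)`_i)`_j.
Proof. move=> hi hj; apply: mul_agree => k l hk hl; rewrite trE //; lia. Qed.

Lemma ps2_mulA (f g h : ps2 R) : ps2_mul f (ps2_mul g h) = ps2_mul (ps2_mul f g) h.
Proof.
apply: functional_extensionality => i; apply: functional_extensionality => j.
pose N := (i + j).+1.
have e1 : ps2_mul f (ps2_mul g h) i j = ((tr N f * (tr N g * tr N h))`_i)`_j.
  apply: mul_agree => k l hk hl.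
    by rewrite trE // /N; lia.
  by rewrite (@mulE N) // /N; lia.
have e2 : ps2_mul (ps2_mul f g) h i j = (((tr N f * tr N g) * tr N h)`_i)`_j.
  apply: mul_agree => k l hk hl.
    by rewrite (@mulE N) // /N; lia.
  by rewrite trE // /N; lia.
by rewrite e1 e2 mulrA.
Qed.

Lemma ps2_mulC (f g : ps2 R) : ps2_mul f g = ps2_mul g f.
Proof.
apply: functional_extensionality => i; apply: functional_extensionality => j.
rewrite (@mulE (i+j).+1) 1?[RHS](@mulE (i+j).+1); try lia.
by rewrite mulrC.
Qed.

Lemma ps2_mulDl (f g h : ps2 R) : ps2_mul (ps2_add f g) h = ps2_add (ps2_mul f h) (ps2_mul g h).
Proof.
apply: functional_extensionality => i; apply: functional_extensionality => j.
rewrite /ps2_mul /ps2_add -big_split; apply: eq_bigr => k _.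
rewrite -big_split; apply: eq_bigr => l _; by rewrite mulrDl.
Qed.

Lemma ps2_mul1 (f : ps2 R) : ps2_mul (ps2_const 1) f = f.
Proof.
apply: functional_extensionality => i; apply: functional_extensionality => j.
rewrite /ps2_mul big_ord_recl big_ord_recl /= /ps2_const /= mul1r !subn0.
rewrite big1 ?addr0; last by move=> l _; rewrite mul0r.
rewrite big1 ?addr0 //; move=> k _; rewrite big1 // => l _; by rewrite mul0r.
Qed.

Lemma ps2_ring_theory : ring_theory (ps2_const 0) (ps2_const 1) (@ps2_add R) (@ps2_mul R)
  (@ps2_sub R) (@ps2_opp R) (@eq (ps2 R)).
Proof.
constructor.
- move=> x; do 2 (apply: functional_extensionality => ?).
  by rewrite /ps2_add /ps2_const; case: ifP; rewrite add0r.
- move=> x y; do 2 (apply: functional_extensionality => ?); by rewrite /ps2_add addrC.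
- move=> x y z; do 2 (apply: functional_extensionality => ?); by rewrite /ps2_add addrA.
- exact: ps2_mul1.
- exact: ps2_mulC.
- exact: ps2_mulA.
- exact: ps2_mulDl.
- by [].
- move=> x; do 2 (apply: functional_extensionality => ?).
  by rewrite /ps2_add /ps2_opp /ps2_const subrr; case: ifP.
Qed.
End Gen.

Add Ring ps2E : (ps2_ring_theory E).

Section Gen2.
Variable R : comRingType.
Local Open Scope ps2_scope.
Local Notation t1 := (ps2_t1 R).
Local Notation t2 := (ps2_t2 R).
Implicit Types (f g : ps2 R) (c : R).

Lemma sum2_single n m (F : nat -> nat -> R) a b : (a < n)%N -> (b < m)%N ->
  (forall k l, (k < n)%N -> (l < m)%N -> (k != a) || (l != b) -> F k l = 0%R) ->
  (\sum_(k < n) \sum_(l < m) F k l = F a b)%R.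
Proof.
move=> ha hb H; rewrite (bigD1 (Ordinal ha)) //=.
have -> : (\sum_(l < m) F a l = F a b)%R.
  rewrite (bigD1 (Ordinal hb)) //=. rewrite big1 ?addr0 // => l hl; apply: H => //.
  apply/orP; right; move: hl; apply: contra => /eqP e.
  by apply/eqP/val_inj.
rewrite big1 ?addr0 // => k hk; rewrite big1 // => l _; apply: H => //.
apply/orP; left; move: hk; apply: contra => /eqP e; by apply/eqP/val_inj.
Qed.

Lemma mulCl (a : R) (f : ps2 R) i j : (a%:S * f) i j = (a * f i j)%R.
Proof.
rewrite /ps2_mul (@sum2_single _ _ (fun k l => a%:S k l * f (i - k)%N (j - l)%N)%R 0 0) // ?subn0 /ps2_const //=.
move=> k l _ _; case: k => [|k]; case: l => [|l] //= _; by rewrite mul0r.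
Qed.

Lemma t1mul f i j : (t1 * f) i j = if i is i'.+1 then f i' j else 0%R.
Proof.
case: i => [|i].
  rewrite /ps2_mul big_ord1 big1 // => l _; by rewrite /ps2_t1 mul0r.
rewrite /ps2_mul (@sum2_single _ _ (fun k l => t1 k l * f (i.+1 - k)%N (j - l)%N)%R 1 0) // ?subn0 /ps2_t1 /= ?mul1r ?subSS ?subn0 //.
move=> k l _ _; case: k => [|[|k]]; case: l => [|l] //= _; by rewrite mul0r.
Qed.

Lemma swap_mul f g : ps2_swap (f * g) = ps2_swap f * ps2_swap g.
Proof.
do 2 (apply: functional_extensionality => ?).
by rewrite /ps2_mul /ps2_swap exchange_big.
Qed.
Lemma swap_add f g : ps2_swap (f + g) = ps2_swap f + ps2_swap g.
Proof. by []. Qed.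
Lemma swap_const c : ps2_swap (c%:S) = c%:S.
Proof. do 2 (apply: functional_extensionality => ?). by rewrite /ps2_swap /ps2_const andbC. Qed.
Lemma swap_t1 : ps2_swap t1 = t2.
Proof. do 2 (apply: functional_extensionality => ?). by rewrite /ps2_swap /ps2_t1 /ps2_t2 andbC. Qed.
Lemma swap_t2 : ps2_swap t2 = t1.
Proof. do 2 (apply: functional_extensionality => ?). by rewrite /ps2_swap /ps2_t1 /ps2_t2 andbC. Qed.
Lemma swapK f : ps2_swap (ps2_swap f) = f. Proof. by []. Qed.

Lemma t2mul f i j : (t2 * f) i j = if j is j'.+1 then f i j' else 0%R.
Proof.
rewrite -[t2 * f]swapK swap_mul swap_t2 /ps2_swap t1mul; by case: j.
Qed.

Lemma const_add (a b : R) : (a + b)%R%:S = a%:S + b%:S.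
Proof. do 2 (apply: functional_extensionality => ?). rewrite /ps2_add /ps2_const; case: ifP => //; by rewrite addr0. Qed.
Lemma const_mul (a b : R) : (a * b)%R%:S = a%:S * b%:S.
Proof. do 2 (apply: functional_extensionality => ?). rewrite mulCl /ps2_const; case: ifP => //; by rewrite mulr0. Qed.
Lemma const_opp (a : R) : (- a)%R%:S = - a%:S.
Proof. do 2 (apply: functional_extensionality => ?). rewrite /ps2_opp /ps2_const; case: ifP => //; by rewrite oppr0. Qed.

Definition ordge k (f : ps2 R) := forall i j, (i + j < k)%N -> f i j = 0%R.

Lemma ordge_mul a b f g : ordge a f -> ordge b g -> ordge (a + b) (f * g).
Proof.
move=> hf hg i j h; rewrite /ps2_mul big1 // => k _; rewrite big1 // => l _.
have := ltn_ord k; have := ltn_ord l => hl hk.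
case: (ltnP (k + l) a) => H; first by rewrite hf // mul0r.
rewrite hg ?mulr0 //; lia.
Qed.
Lemma ordge_add k f g : ordge k f -> ordge k g -> ordge k (f + g).
Proof. by move=> hf hg i j h; rewrite /ps2_add hf ?hg ?addr0. Qed.
Lemma ordge_opp k f : ordge k f -> ordge k (- f).
Proof. by move=> hf i j h; rewrite /ps2_opp hf ?oppr0. Qed.
Lemma ordge_sub k f g : ordge k f -> ordge k g -> ordge k (f - g).
Proof. by move=> hf hg; apply: ordge_add => //; apply: ordge_opp. Qed.
Lemma ordge_weak k k' f : (k' <= k)%N -> ordge k f -> ordge k' f.
Proof. by move=> hk hf i j h; rewrite hf //; lia. Qed.
Lemma ordge0 f : ordge 0 f.
Proof. by move=> i j; rewrite ltn0. Qed.
Lemma ordge_zero k : ordge k (0%R%:S).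
Proof. by move=> i j _; rewrite /ps2_const; case: ifP. Qed.
Lemma ordge_t1 : ordge 1 t1.
Proof. by move=> [|i] [|j]. Qed.
Lemma ordge_t2 : ordge 1 t2.
Proof. by move=> [|i] [|j]. Qed.
Lemma ordge_cmul k c f : ordge k f -> ordge k (c%:S * f).
Proof. by move=> hf i j h; rewrite mulCl hf ?mulr0. Qed.

Lemma ordge_eq k f g i j : ordge k (f - g) -> (i + j < k)%N -> f i j = g i j.
Proof. move=> h H; apply/eqP; rewrite -subr_eq0; apply/eqP; exact: h. Qed.

End Gen2.

Local Open Scope ps2_scope.

Lemma fixpt (Phi : ps2 E -> ps2 E) :
  (forall k f g, ordge k (f - g) -> ordge k.+1 (Phi f - Phi g)) -> exists f, f = Phi f.
Proof.
move=> hP; pose x n := iter n Phi (0%R%:S).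
have h1 : forall n, ordge n (x n.+1 - x n).
  elim=> [|n IH]; first exact: ordge0.
  exact: hP _ _ _ IH.
have h2 : forall n d, ordge n (x (d + n)%N - x n).
  move=> n; elim=> [|d IH].
    have -> : x (0 + n)%N - x n = 0%R%:S by rewrite add0n; ring.
    exact: ordge_zero.
  have -> : x (d.+1 + n)%N - x n = (x (d + n).+1 - x (d + n)%N) + (x (d + n)%N - x n).
    rewrite addSn; ring.
  apply: ordge_add => //; apply: ordge_weak (h1 _); lia.
pose f i j := x (i + j).+1 i j.
have h3 : forall N, ordge N (f - x N).
  move=> N i j H; rewrite /ps2_sub /ps2_add /ps2_opp /f.
  have := h2 (i + j).+1 (N - (i + j).+1)%N; rewrite subnK //.
  by move/ordge_eq => -> //; rewrite subrr.
exists f; apply: functional_extensionality => i; apply: functional_extensionality => j.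
have H := hP _ _ _ (h3 (i + j).+1).
rewrite (ordge_eq H) //.
rewrite /f; symmetry; apply: (ordge_eq (h1 (i + j).+1)); lia.
Qed.
Implicit Types (f g h q : ps2 E).

Lemma unit_inv g : ordge 1 (g - 1%:S) -> exists h, g * h = 1%:S.
Proof.
move=> hg.
have contr : forall k f f', ordge k (f - f') ->
   ordge k.+1 ((1%:S - (g - 1%:S) * f) - (1%:S - (g - 1%:S) * f')).
  move=> k f f' hk.
  have -> : (1%:S - (g - 1%:S) * f) - (1%:S - (g - 1%:S) * f') = - ((g - 1%:S) * (f - f')) by ring.
  apply: ordge_opp; exact: (ordge_mul hg hk).
have [f hf] := fixpt contr.
exists f; transitivity (1%:S + (f - (1%:S - (g - 1%:S) * f))); first ring.
rewrite -hf; ring.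
Qed.

Lemma div_spec f g : (exists q : ps2 E, g * q = f) -> g * (f / g) = f.
Proof. move=> ex; exact: (epsilon_spec (inhabits (fun _ _ => 0%R)) (fun q : ps2 E => g * q = f) ex). Qed.

Lemma divE f g h : g * h = 1%:S -> f / g = h * f.
Proof.
move=> gh.
have ex : exists q : ps2 E, g * q = f.
  exists (h * f); transitivity ((g * h) * f); first ring.
  rewrite gh; ring.
have hq := div_spec ex; move: hq; set q := f / g => hq.
transitivity ((g * h) * q); first by rewrite gh; ring.
transitivity (h * (g * q)); first ring.
by rewrite hq.
Qed.

Lemma divR f g q : (forall x, g * x = 0%:S -> x = 0%:S) -> g * q = f -> f / g = q.
Proof.
move=> reg gq.
have ex : exists q : ps2 E, g * q = f by exists q.
have hq := div_spec ex; move: hq; set q' := f / g => hq.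
have H : g * (q' - q) = 0%:S.
  transitivity (g * q' - g * q); first ring.
  rewrite hq gq; ring.
have := reg _ H => H'.
transitivity ((q' - q) + q); first ring.
rewrite H'; ring.
Qed.

Lemma regular f u : f 0%N 0%N = 0%R -> (u * f 1%N 0%N = 1)%R ->
  forall g, f * g = 0%:S -> g = 0%:S.
Proof.
move=> f00 uf g fg.
suff H : forall n j i, (i + j)%N = n -> g i j = 0%R.
  apply: functional_extensionality => i; apply: functional_extensionality => j.
  rewrite (H (i + j)%N j i) //; rewrite /ps2_const; by case: ifP.
elim/ltn_ind => n IHn; elim/ltn_ind => j IHj i hij.
have := congr1 (fun h => h i.+1 j) fg.
rewrite /ps2_mul /=.
rewrite (@sum2_single _ _ _ (fun k l => f k l * g (i.+1 - k)%N (j - l)%N)%R 1 0) //; last first.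
  move=> k l hk hl hkl.
  case: k hk hkl => [|k] hk hkl.
    case: l hl hkl => [|l] hl hkl; first by rewrite f00 mul0r.
    case: l hl hkl => [|l] hl hkl.
      rewrite subn0 subn1 (IHj j.-1) ?mulr0 //; lia.
    rewrite (IHn (i.+1 + j - l.+2)%N) ?mulr0 //; lia.
  case: k hk hkl => [|k] hk hkl.
    case: l hl hkl => [|l] hl hkl //.
    rewrite (IHn (i + j - l.+1)%N) ?mulr0 //; lia.
  rewrite (IHn (i.+1 + j - k.+2 - l)%N) ?mulr0 //; lia.
rewrite subSS subn0 subn0 /ps2_const /= => h.
by rewrite -[g i j]mul1r -uf -mulrA h mulr0.
Qed.

Lemma ordge_mulW a b k f g : ordge a f -> ordge b g -> (k <= a + b)%N -> ordge k (f * g).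
Proof. move=> hf hg hk; exact: ordge_weak hk (ordge_mul hf hg). Qed.

Definition t2free (f : ps2 E) := forall i j, (0 < j)%N -> f i j = 0%R.

Lemma t2free_mul f g : t2free f -> t2free g -> t2free (f * g).
Proof.
move=> hf hg i j hj; rewrite /ps2_mul big1 // => k _; rewrite big1 // => l _.
have := ltn_ord l => hl.
case: (posnP l) => [->|l0]; last by rewrite hf // mul0r.
by rewrite subn0 hg ?mulr0.
Qed.
Lemma t2free_add f g : t2free f -> t2free g -> t2free (f + g).
Proof. by move=> hf hg i j hj; rewrite /ps2_add hf ?hg ?addr0. Qed.
Lemma t2free_const c : t2free (c%:S).
Proof. by move=> i j hj; rewrite /ps2_const; case: ifP => // /andP [_ /eqP h]; move: hj; rewrite h. Qed.
Lemma t2free_t1 : t2free t1.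
Proof. by move=> i [|j] // _; rewrite /t1 /ps2_t1 andbF. Qed.

Definition cut (f : ps2 E) : ps2 E := fun i j => if (0 < i)%N && (j == 0)%N then f i j else 0%R.

Lemma curve_rhs_sub t a c : curve_rhs t a - curve_rhs t c = (a - c) *
  (mu1%:S * t + mu2%:S * t * t + mu3%:S * (a + c) + mu4%:S * t * (a + c)
   + mu6%:S * (a * a + a * c + c * c)).
Proof. rewrite /curve_rhs; ring. Qed.

Lemma ordge_rhs_diff a c : ordge 1 a -> ordge 1 c ->
  ordge 1 (mu1%:S * t1 + mu2%:S * t1 * t1 + mu3%:S * (a + c) + mu4%:S * t1 * (a + c)
   + mu6%:S * (a * a + a * c + c * c)).
Proof.
move=> ha hc.
have hac : ordge 1 (a + c) by apply: ordge_add.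
repeat apply: ordge_add.
- by apply: ordge_cmul; exact: ordge_t1.
- apply: (ordge_mulW (a:=1) (b:=1)) => //; [apply: ordge_cmul; exact: ordge_t1 | exact: ordge_t1].
- by apply: ordge_cmul.
- apply: (ordge_mulW (a:=1) (b:=1)) => //; apply: ordge_cmul; exact: ordge_t1.
- apply: ordge_cmul; repeat apply: ordge_add; exact: (ordge_mulW (a:=1) (b:=1)).
Qed.

Lemma tate_exists : exists f : ps2 E, (forall i j, (0 < j)%N -> f i j = 0%R) /\ f 0%N 0%N = 0%R
                      /\ f = curve_rhs t1 f.
Proof.
have hcut : forall f, ordge 1 (cut f) by move=> f [|i] [|j].
have contr : forall k f g, ordge k (f - g) -> ordge k.+1 (curve_rhs t1 (cut f) - curve_rhs t1 (cut g)).
  move=> k f g hk; rewrite curve_rhs_sub.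
  apply: (ordge_mulW (a:=k) (b:=1)); last by rewrite addn1.
    move=> i j hij; rewrite /ps2_sub /ps2_add /ps2_opp /cut; case: ifP => _; last by rewrite subrr.
    exact: hk.
  exact: ordge_rhs_diff.
have [f hf] := fixpt contr.
have tf : t2free f.
  rewrite hf /curve_rhs; have tc : t2free (cut f) by move=> i [|j] // _; rewrite /cut andbF.
  repeat apply: t2free_add; repeat apply: t2free_mul; (exact: t2free_const || exact: t2free_t1 || exact: tc).
have f0 : f 0%N 0%N = 0%R.
  rewrite hf; apply: (_ : ordge 1 _) => //.
  rewrite /curve_rhs; repeat apply: ordge_add.
  - by apply: (ordge_mulW (ordge0 _) (ordge_t1 _)).
  - by apply: (ordge_mulW (ordge0 _) (hcut f)).
  - by apply: (ordge_mulW (ordge0 _) (hcut f)).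
  - by apply: (ordge_mulW (ordge0 _) (hcut f)).
  - by apply: (ordge_mulW (ordge0 _) (hcut f)).
  - by apply: (ordge_mulW (ordge0 _) (hcut f)).
have cf : cut f = f.
  apply: functional_extensionality => i; apply: functional_extensionality => j.
  rewrite /cut; case: i => [|i]; case: j => [|j] //=; rewrite ?tf //.
exists (cut f); split; first by move=> i [|j] // _; rewrite /cut andbF.
split; first by [].
by rewrite {1}cf.
Qed.

Lemma tate_spec : (forall i j, (0 < j)%N -> tate_s i j = 0%R) /\ tate_s 0%N 0%N = 0%R
                      /\ tate_s = curve_rhs t1 tate_s.
Proof. exact: (epsilon_spec _ _ tate_exists). Qed.

Lemma ts0 i j : (0 < j)%N -> tate_s i j = 0%R.
Proof. by case: tate_spec => h _; apply: h. Qed.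
Lemma ts00 : tate_s 0%N 0%N = 0%R.
Proof. by case: tate_spec => _ []. Qed.
Lemma tsE : tate_s = curve_rhs t1 tate_s.
Proof. by case: tate_spec => _ []. Qed.

Lemma ordge_rhs k s : ordge k s -> (1 <= k <= 2)%N -> ordge k.+1 (curve_rhs t1 s).
Proof.
move=> hs /andP [k1 k2]; rewrite /curve_rhs.
have o1 := ordge_t1 E.
repeat apply: ordge_add.
- apply: (ordge_mulW (ordge_mul o1 o1) o1); lia.
- apply: (ordge_mulW (ordge_cmul _ o1) hs); lia.
- apply: (ordge_mulW (ordge_mul (ordge_cmul _ o1) o1) hs); lia.
- apply: (ordge_mulW (ordge_cmul _ hs) hs); lia.
- apply: (ordge_mulW (ordge_mul (ordge_cmul _ o1) hs) hs); lia.
- apply: (ordge_mulW (ordge_mul (ordge_cmul _ hs) hs) hs); lia.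
Qed.

Lemma ordge_ts : ordge 3 tate_s.
Proof.
have h1 : ordge 1 tate_s by move=> [|i] [|j] //; rewrite ts00.
have h2 : ordge 2 tate_s by rewrite tsE; exact: ordge_rhs h1 _.
by rewrite tsE; exact: ordge_rhs h2 _.
Qed.

Definition mm : ps2 E := fun i j => tate_s (i + j).+1 0%N.
Definition bb : ps2 E := fun i j => if (0 < i)%N && (0 < j)%N then (- tate_s (i + j)%N 0%N)%R else 0%R.

Lemma coefB f g i j : (f - g) i j = (f i j - g i j)%R. Proof. by []. Qed.
Lemma coefD f g i j : (f + g) i j = (f i j + g i j)%R. Proof. by []. Qed.
Lemma coefN f i j : (- f) i j = (- f i j)%R. Proof. by []. Qed.

Lemma m_eq : (t1 - t2) * mm = s1 - s2.
Proof.
have -> : (t1 - t2) * mm = t1 * mm - t2 * mm by ring.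
apply: functional_extensionality => i; apply: functional_extensionality => j.
rewrite !coefB t1mul t2mul /s1 /s2 /ps2_swap /mm.
case: i => [|i]; case: j => [|j].
- by rewrite !subrr.
- by rewrite (@ts0 _ j.+1) // add0n sub0r.
- by rewrite (@ts0 _ i.+1) // addn0 subr0.
- by rewrite (@ts0 _ j.+1) // (@ts0 _ i.+1) // addnS addSn !subrr.
Qed.

Lemma b_eq : (t1 - t2) * bb = t1 * s2 - t2 * s1.
Proof.
have -> : (t1 - t2) * bb = t1 * bb - t2 * bb by ring.
apply: functional_extensionality => i; apply: functional_extensionality => j.
rewrite !coefB !t1mul !t2mul /s1 /s2 /ps2_swap /bb.
case: i => [|i]; case: j => [|j] /=.
- by rewrite subrr.
- by case: j => [|j]; rewrite ?ts00 ?(@ts0 _ j.+1) // subrr.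
- by case: i => [|i]; rewrite ?ts00 ?(@ts0 _ i.+1) // subrr.
case: i => [|i]; case: j => [|j] /=.
- by rewrite !subrr.
- by rewrite (@ts0 _ j.+1) // subr0 sub0r opprK add1n.
- by rewrite (@ts0 _ i.+1) // sub0r subr0 addn1.
- by rewrite (@ts0 _ j.+1) // (@ts0 _ i.+1) // subrr !addSn !addnS opprK addNr.
Qed.

Lemma reg_t12 x : (t1 - t2) * x = 0%:S -> x = 0%:S.
Proof.
apply: (@regular (t1 - t2) 1%R); first by rewrite coefB /t1 /t2 /ps2_t1 /ps2_t2 /= subrr.
by rewrite coefB /t1 /t2 /ps2_t1 /ps2_t2 /= subr0 mulr1.
Qed.

Lemma reg_t1 x : t1 * x = 0%:S -> x = 0%:S.
Proof. by apply: (@regular t1 1%R); rewrite /t1 /ps2_t1 //= mulr1. Qed.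

Lemma reg_t2 x : t2 * x = 0%:S -> x = 0%:S.
Proof.
move=> h; rewrite -[x]swapK; have -> : ps2_swap x = 0%:S.
  apply: reg_t1; by rewrite /t1 -swap_t2 -swap_mul h swap_const.
by rewrite swap_const.
Qed.

Lemma line_mE : line_m = mm.
Proof. apply: divR; [exact: reg_t12 | exact: m_eq]. Qed.
Lemma line_bE : line_b = bb.
Proof. apply: divR; [exact: reg_t12 | exact: b_eq]. Qed.

Lemma ordge_m : ordge 2 line_m.
Proof. rewrite line_mE => i j h; rewrite /mm ordge_ts //; lia. Qed.
Lemma ordge_b : ordge 2 line_b.
Proof. rewrite line_bE => i j h; rewrite /bb; case: ifP => // _; rewrite ordge_ts ?oppr0 //; lia. Qed.

Lemma s1E : s1 = curve_rhs t1 s1.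
Proof. exact: tsE. Qed.
Lemma s2E : s2 = curve_rhs t2 s2.
Proof.
rewrite /s2 {1}tsE /curve_rhs !swap_add !swap_mul !swap_const.
by rewrite /t1 swap_t1.
Qed.

Definition Aof (a : ps2 E) : ps2 E := 1%:S + mu2%:S * a + mu4%:S * a * a + mu6%:S * a * a * a.
Definition Dof (c : ps2 E) : ps2 E := 1%:S - mu3%:S * c - mu6%:S * c * c.
Definition C2of (a c : ps2 E) : ps2 E := mu1%:S * a + mu2%:S * c + mu3%:S * a * a
  + (mu4%:S + mu4%:S) * a * c + (mu6%:S + mu6%:S + mu6%:S) * a * a * c.
Definition a1of (a c : ps2 E) : ps2 E := a - (mu1%:S * c + (mu3%:S + mu3%:S) * a * c
  + mu4%:S * c * c + (mu6%:S + mu6%:S + mu6%:S) * a * c * c).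
Definition Pz (m b t : ps2 E) : ps2 E := (m * t + b) - curve_rhs t (m * t + b).
Definition Xof (t1 t2 m b : ps2 E) : ps2 E :=
  t1 + t2 - mu1%:S * t1 * t2
    - mu3%:S * ((t1 + t2) * b + t1 * t2 * m)
    - mu4%:S * t1 * t2 * b
    - mu6%:S * b * ((t1 + t2) * b + (1%:S + 1%:S) * t1 * t2 * m).

Lemma I1 (T1 T2 M Bb : ps2 E) : (T1 - T2) * (Aof M * ((T1 + T2) * (T1 + T2) - T1 * T2)
   + C2of M Bb * (T1 + T2) - a1of M Bb) = Pz M Bb T2 - Pz M Bb T1.
Proof. rewrite /Aof /C2of /a1of /Pz /curve_rhs; ring. Qed.

Lemma I2 (T1 T2 M Bb : ps2 E) : (T1 - T2) * (Bb * Dof Bb + T1 * T2 * (Aof M * (T1 + T2) + C2of M Bb))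
  = T1 * Pz M Bb T2 - T2 * Pz M Bb T1.
Proof. rewrite /Aof /Dof /C2of /Pz /curve_rhs; ring. Qed.

Lemma IW (T1 T2 M Bb : ps2 E) :
  Xof T1 T2 M Bb * Bb + T1 * T2 * (M * Dof Bb + T1 * T2 * Aof M)
  = (T1 + T2) * (Bb * Dof Bb + T1 * T2 * (Aof M * (T1 + T2) + C2of M Bb))
    - T1 * T2 * (Aof M * ((T1 + T2) * (T1 + T2) - T1 * T2) + C2of M Bb * (T1 + T2) - a1of M Bb).
Proof. rewrite /Xof /Aof /Dof /C2of /a1of; ring. Qed.

Lemma IP (T1 T2 T3 M Bb : ps2 E) : Pz M Bb T3 =
  T3 * T3 * (- C2of M Bb - Aof M * (T1 + T2 + T3))
  + T3 * (a1of M Bb + Aof M * (T1 * T2 + (T1 + T2) * T3))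
  + (Bb * Dof Bb - Aof M * (T1 * T2) * T3).
Proof. rewrite /Aof /Dof /C2of /a1of /Pz /curve_rhs; ring. Qed.

Lemma IQ (T N : ps2 E) : T * N - curve_rhs T (T * N) =
  T * (N - (mu1%:S * N + mu3%:S * N * N) * T - Aof N * T * T).
Proof. rewrite /Aof /curve_rhs; ring. Qed.

Lemma core (T1 T2 M Bb A D C2 a1 X Ai Di Bi T3 N Bn C2n P1 P2 P3 : ps2 E) :
  (forall x, (T1 - T2) * x = 0%:S -> x = 0%:S) ->
  (forall x, T1 * x = 0%:S -> x = 0%:S) ->
  (forall x, T2 * x = 0%:S -> x = 0%:S) ->
  (forall x, T3 * x = 0%:S -> x = 0%:S) ->
  P1 = 0%:S -> P2 = 0%:S ->
  (T1 - T2) * (A * ((T1 + T2) * (T1 + T2) - T1 * T2) + C2 * (T1 + T2) - a1) = P2 - P1 ->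
  (T1 - T2) * (Bb * D + T1 * T2 * (A * (T1 + T2) + C2)) = T1 * P2 - T2 * P1 ->
  X * Bb + T1 * T2 * (M * D + T1 * T2 * A)
  = (T1 + T2) * (Bb * D + T1 * T2 * (A * (T1 + T2) + C2))
    - T1 * T2 * (A * ((T1 + T2) * (T1 + T2) - T1 * T2) + C2 * (T1 + T2) - a1) ->
  P3 = T3 * T3 * (- C2 - A * (T1 + T2 + T3))
  + T3 * (a1 + A * (T1 * T2 + (T1 + T2) * T3))
  + (Bb * D - A * (T1 * T2) * T3) ->
  (M * T3 + Bb = T3 * N -> P3 = T3 * (N - C2n * T3 - Bn * T3 * T3)) ->
  A * Ai = 1%:S -> D * Di = 1%:S -> Bn * Bi = 1%:S ->
  T3 = - (Ai * C2) - T1 - T2 ->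
  N = M + T1 * T2 * (Di * A) ->
  - (Bi * C2n) - T3 = X * ((Bi * (Di * Di)) * A).
Proof.
move=> reg12 regT1 regT2 regT3 hP1 hP2 I1 I2 IW IP IQ hA hD hB dT3 dN.
have Ra0 : A * ((T1 + T2) * (T1 + T2) - T1 * T2) + C2 * (T1 + T2) - a1 = 0%:S.
  by apply: reg12; rewrite I1 hP1 hP2; ring.
have Rb0 : Bb * D + T1 * T2 * (A * (T1 + T2) + C2) = 0%:S.
  by apply: reg12; rewrite I2 hP1 hP2; ring.
have At3 : A * T3 = - C2 - A * (T1 + T2).
  transitivity (- C2 - A * (T1 + T2) - (A * Ai - 1%:S) * C2); first by rewrite dT3; ring.
  rewrite hA; ring.
have V1 : Bb * D = A * (T1 * T2) * T3.
  transitivity ((Bb * D + T1 * T2 * (A * (T1 + T2) + C2))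
     - T1 * T2 * (A * T3 - (- C2 - A * (T1 + T2))) + A * (T1 * T2) * T3); first ring.
  rewrite Rb0 At3; ring.
have nD : N * D = M * D + T1 * T2 * A.
  transitivity (M * D + T1 * T2 * A * (D * Di)); first by rewrite dN; ring.
  rewrite hD; ring.
have W0 : X * Bb + T1 * T2 * (N * D) = 0%:S.
  rewrite nD IW Ra0 Rb0; ring.
have W : X * A * T3 + N * D * D = 0%:S.
  apply: regT2; apply: regT1.
  transitivity (X * (A * (T1 * T2) * T3) + D * (T1 * T2 * (N * D))); first ring.
  rewrite -V1.
  transitivity (D * (X * Bb + T1 * T2 * (N * D))); first ring.
  rewrite W0; ring.
have hs3 : M * T3 + Bb = T3 * N.
  transitivity (T3 * N - Di * (A * (T1 * T2) * T3 - Bb * D) - Bb * (D * Di - 1%:S)).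
    rewrite dN; ring.
  rewrite V1 hD; ring.
have Q0 : N - C2n * T3 - Bn * T3 * T3 = 0%:S.
  apply: regT3; rewrite -(IQ hs3) IP.
  transitivity (- (T3 * T3) * (A * T3 - (- C2 - A * (T1 + T2)))
     + T3 * (- (A * ((T1 + T2) * (T1 + T2) - T1 * T2) + C2 * (T1 + T2) - a1)
             + (T1 + T2) * (A * T3 - (- C2 - A * (T1 + T2))))
     + (Bb * D - A * (T1 * T2) * T3)); first ring.
  rewrite At3 Ra0 V1; ring.
have BZ : Bn * (- (Bi * C2n) - T3 - X * ((Bi * (Di * Di)) * A)) = 0%:S.
  apply: regT3.
  transitivity (- (Bn * Bi - 1%:S) * (T3 * C2n + X * A * T3 * (Di * Di))
     + (N - C2n * T3 - Bn * T3 * T3) - Di * Di * (X * A * T3 + N * D * D)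
     + N * (D * Di - 1%:S) * (D * Di + 1%:S)); first ring.
  rewrite hB Q0 W hD; ring.
have Z0 : - (Bi * C2n) - T3 - X * ((Bi * (Di * Di)) * A) = 0%:S.
  transitivity (Bi * (Bn * (- (Bi * C2n) - T3 - X * ((Bi * (Di * Di)) * A)))
     - (Bn * Bi - 1%:S) * (- (Bi * C2n) - T3 - X * ((Bi * (Di * Di)) * A))); first ring.
  rewrite BZ hB; ring.
transitivity ((- (Bi * C2n) - T3 - X * ((Bi * (Di * Di)) * A)) + X * ((Bi * (Di * Di)) * A)); first ring.
rewrite Z0; ring.
Qed.

Lemma core_hs3 (T1 T2 M Bb A D C2 Ai Di T3 N P1 P2 : ps2 E) :
  (forall x, (T1 - T2) * x = 0%:S -> x = 0%:S) ->
  P1 = 0%:S -> P2 = 0%:S ->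
  (T1 - T2) * (Bb * D + T1 * T2 * (A * (T1 + T2) + C2)) = T1 * P2 - T2 * P1 ->
  A * Ai = 1%:S -> D * Di = 1%:S ->
  T3 = - (Ai * C2) - T1 - T2 ->
  N = M + T1 * T2 * (Di * A) ->
  M * T3 + Bb = T3 * N.
Proof.
move=> reg12 hP1 hP2 I2 hA hD dT3 dN.
have Rb0 : Bb * D + T1 * T2 * (A * (T1 + T2) + C2) = 0%:S.
  by apply: reg12; rewrite I2 hP1 hP2; ring.
have At3 : A * T3 = - C2 - A * (T1 + T2).
  transitivity (- C2 - A * (T1 + T2) - (A * Ai - 1%:S) * C2); first by rewrite dT3; ring.
  rewrite hA; ring.
have V1 : Bb * D = A * (T1 * T2) * T3.
  transitivity ((Bb * D + T1 * T2 * (A * (T1 + T2) + C2))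
     - T1 * T2 * (A * T3 - (- C2 - A * (T1 + T2))) + A * (T1 * T2) * T3); first ring.
  rewrite Rb0 At3; ring.
transitivity (T3 * N - Di * (A * (T1 * T2) * T3 - Bb * D) - Bb * (D * Di - 1%:S)).
  rewrite dN; ring.
rewrite V1 hD; ring.
Qed.

Lemma lc2_0 a : line_coef2 a 0%:S = mu1%:S * a + mu3%:S * a * a.
Proof.
rewrite /line_coef2 !const_mul.
have -> : (2 : E)%:S = 1%:S + 1%:S by rewrite -const_add mulr2n.
have -> : (3 : E)%:S = 1%:S + 1%:S + 1%:S by rewrite -!const_add !mulrS mulr0n addr0 addrA.
ring.
Qed.

Lemma lc2E a c : line_coef2 a c = C2of a c.
Proof.
rewrite /line_coef2 /C2of !const_mul.
have -> : (2 : E)%:S = 1%:S + 1%:S by rewrite -const_add mulr2n.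
have -> : (3 : E)%:S = 1%:S + 1%:S + 1%:S by rewrite -!const_add !mulrS mulr0n addr0 addrA.
ring.
Qed.

Lemma two_S : (2 : E)%:S = 1%:S + 1%:S.
Proof. by rewrite -const_add mulr2n. Qed.

Lemma ordge1_of2 f : ordge 2 f -> ordge 1 f.
Proof. exact: ordge_weak. Qed.

Theorem mainTheorem1 :
  let m := line_m in
  let b := line_b in
  let A := (1%:S + mu2%:S * m + mu4%:S * m * m + mu6%:S * m * m * m)%PS in
  let D := (1%:S - mu3%:S * b - mu6%:S * b * b)%PS in
  let n := (m + t1 * t2 * (A / D))%PS in
  let B := (1%:S + mu2%:S * n + mu4%:S * n * n + mu6%:S * n * n * n)%PS in
  F_mu =
  ((t1 + t2 - mu1%:S * t1 * t2
    - mu3%:S * ((t1 + t2) * b + t1 * t2 * m)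
    - mu4%:S * t1 * t2 * b
    - mu6%:S * b * ((t1 + t2) * b + 2%:S * t1 * t2 * m))
   * (A / (B * (D * D))))%PS.
Proof.
cbv zeta.
have hm := ordge_m; have hb := ordge_b.
have o1 := ordge_t1 E; have o2 := ordge_t2 E.
have [Ai hA] : exists Ai, Aof line_m * Ai = 1%:S.
  apply: unit_inv.
  have -> : Aof line_m - 1%:S = mu2%:S * line_m + mu4%:S * line_m * line_m
     + mu6%:S * line_m * line_m * line_m by rewrite /Aof; ring.
  repeat apply: ordge_add.
  - exact: ordge_cmul (ordge1_of2 hm).
  - exact: (ordge_mulW (ordge_cmul _ hm) hm).
  - exact: (ordge_mulW (ordge_mul (ordge_cmul _ hm) hm) hm).
have [Di hD] : exists Di, Dof line_b * Di = 1%:S.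
  apply: unit_inv.
  have -> : Dof line_b - 1%:S = - (mu3%:S * line_b) - mu6%:S * line_b * line_b by rewrite /Dof; ring.
  apply: ordge_sub; first exact: ordge_opp (ordge_cmul _ (ordge1_of2 hb)).
  exact: (ordge_mulW (ordge_cmul _ hb) hb).
have hC2 : ordge 2 (C2of line_m line_b).
  rewrite /C2of; repeat apply: ordge_add.
  - exact: ordge_cmul hm.
  - exact: ordge_cmul hb.
  - exact: (ordge_mulW (ordge_cmul _ hm) hm).
  - exact: (ordge_mulW (ordge_mul (ordge0 _) hm) hb).
  - exact: (ordge_mulW (ordge_mul (ordge_mul (ordge0 _) hm) hm) hb).
have dT3 : t3 = - (Ai * C2of line_m line_b) - t1 - t2.
  by rewrite /t3 /third_root lc2E (divE _ hA).
have hAC : ordge 2 (Ai * C2of line_m line_b) := ordge_mulW (ordge0 Ai) hC2 (leqnn _).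
have regT3 : forall x, t3 * x = 0%:S -> x = 0%:S.
  apply: (@regular t3 (-1)%R).
    by rewrite dT3 !coefB coefN hAC // /t1 /t2 /ps2_t1 /ps2_t2 /= !oppr0 !addr0.
  by rewrite dT3 !coefB coefN hAC // /t1 /t2 /ps2_t1 /ps2_t2 /= !oppr0 !addr0 add0r mulrNN mulr1.
have hm' : (t1 - t2) * line_m = s1 - s2 by rewrite line_mE; exact: m_eq.
have hb' : (t1 - t2) * line_b = t1 * s2 - t2 * s1 by rewrite line_bE; exact: b_eq.
have hs1 : line_m * t1 + line_b = s1.
  have H : (t1 - t2) * (line_m * t1 + line_b - s1) = 0%:S.
    transitivity (t1 * ((t1 - t2) * line_m) + (t1 - t2) * line_b - (t1 - t2) * s1); first ring.
    rewrite hm' hb'; ring.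
  have H' := reg_t12 H.
  transitivity ((line_m * t1 + line_b - s1) + s1); first ring.
  rewrite H'; ring.
have hs2 : line_m * t2 + line_b = s2.
  have H : (t1 - t2) * (line_m * t2 + line_b - s2) = 0%:S.
    transitivity (t2 * ((t1 - t2) * line_m) + (t1 - t2) * line_b - (t1 - t2) * s2); first ring.
    rewrite hm' hb'; ring.
  have H' := reg_t12 H.
  transitivity ((line_m * t2 + line_b - s2) + s2); first ring.
  rewrite H'; ring.
have P1 : Pz line_m line_b t1 = 0%:S by rewrite /Pz hs1 {1}s1E; ring.
have P2 : Pz line_m line_b t2 = 0%:S by rewrite /Pz hs2 {1}s2E; ring.
have hs3 : line_m * t3 + line_b = t3 * (line_m + t1 * t2 * (Di * Aof line_m)).
  apply: (@core_hs3 t1 t2 line_m line_b (Aof line_m) (Dof line_b) (C2of line_m line_b) Ai Di t3 _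
            (Pz line_m line_b t1) (Pz line_m line_b t2)) => //.
  - exact: reg_t12.
  - exact: I2.
have slopeE : slope_OP3 = line_m + t1 * t2 * (Di * Aof line_m).
  apply: divR; [exact: regT3 | by rewrite -hs3].
have hN1 : ordge 1 (line_m + t1 * t2 * (Di * Aof line_m)).
  apply: ordge_add; first exact: ordge1_of2 hm.
  exact: (ordge_mulW (ordge_mul o1 o2) (ordge0 _)).
have [Bi hB] : exists Bi, Aof (line_m + t1 * t2 * (Di * Aof line_m)) * Bi = 1%:S.
  apply: unit_inv.
  move: hN1; set N := (line_m + _) => hN1.
  have -> : Aof N - 1%:S = mu2%:S * N + mu4%:S * N * N + mu6%:S * N * N * N by rewrite /Aof; ring.
  repeat apply: ordge_add.
  - exact: ordge_cmul hN1.
  - exact: (ordge_mulW (ordge_cmul _ hN1) (ordge0 _)).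
  - exact: (ordge_mulW (ordge_mul (ordge_cmul _ hN1) (ordge0 _)) (ordge0 _)).
have hBDD : (Aof (line_m + t1 * t2 * (Di * Aof line_m)) * (Dof line_b * Dof line_b)) * (Bi * (Di * Di)) = 1%:S.
  transitivity ((Aof (line_m + t1 * t2 * (Di * Aof line_m)) * Bi) * ((Dof line_b * Di) * (Dof line_b * Di))); first ring.
  rewrite hB hD; ring.
rewrite (divE _ hD).
rewrite (divE _ hBDD).
rewrite /F_mu /third_root slopeE (divE _ hB) lc2_0 two_S.
transitivity (- (Bi * (mu1%:S * (line_m + t1 * t2 * (Di * Aof line_m))
   + mu3%:S * (line_m + t1 * t2 * (Di * Aof line_m)) * (line_m + t1 * t2 * (Di * Aof line_m)))) - t3); first ring.
apply: (@core t1 t2 line_m line_b (Aof line_m) (Dof line_b) (C2of line_m line_b) (a1of line_m line_b)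
   (Xof t1 t2 line_m line_b) Ai Di Bi t3 (line_m + t1 * t2 * (Di * Aof line_m))
   (Aof (line_m + t1 * t2 * (Di * Aof line_m)))
   (mu1%:S * (line_m + t1 * t2 * (Di * Aof line_m))
   + mu3%:S * (line_m + t1 * t2 * (Di * Aof line_m)) * (line_m + t1 * t2 * (Di * Aof line_m)))
   (Pz line_m line_b t1) (Pz line_m line_b t2) (Pz line_m line_b t3)).
- exact: reg_t12.
- exact: reg_t1.
- exact: reg_t2.
- exact: regT3.
- exact: P1.
- exact: P2.
- exact: I1.
- exact: I2.
- exact: IW.
- exact: IP.
- by move=> h; rewrite /Pz h; exact: IQ.
- exact: hA.
- exact: hD.
- exact: hB.
- exact: dT3.
- by [].
Qed.
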